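(* In the setting described in the context, at the $k$-th iteration of Algorithm Solve(QVP), for each $v\in V^k$ let $w_v=v+t_v\hat d$ where $t_v$ is the optimal value of $(P^2(v))$. Then $$d_H(\mathcal{P}^k,\mathcal{Y}^{\diamond})\le\max_{v\in V^k}\|w_v-v\|.$$
   Context: Setting: $\mathcal{S}\subset\mathbb{R}^n$ nonempty convex compact; $f=(f_1,\dots,f_p):\mathbb{R}^n\to\mathbb{R}^p$ ($p\ge2$), each $f_i$ strictly quasiconvex on $\mathcal{S}$ (continuous and $h(x^1)<h(x^2)\Rightarrow h(\lambda x^1+(1-\lambda)x^2)<h(x^2)$ for $0<\lambda<1$). Vector inequalities are componentwise, $[a,b]=\{z:a\le z\le b\}$, $e^i$ is the $i$-th unit vector, $e=(1,\dots,1)$. $\mathcal{Y}=f(\mathcal{S})$, $\mathcal{Y}^+=\mathcal{Y}+\mathbb{R}^p_+$. $m_i=\min_{x\in\mathcal{S}}f_i(x)$ (assume $m\notin\mathcal{Y}$); $M\in\mathbb{R}^p$ satisfies $M_i\ge\max_{x\in\mathcal{S}}f_i(x)$ (constructed as the max of $f_i$ over the vertices of a simplex containing $\mathcal{S}$). $\mathcal{Y}^{\diamond}=\mathcal{Y}^+\cap(M-\mathbb{R}^p_+)$. Fix $\hat d>0$; $(P^2(v))$ is $\min_{x\in\mathcal{S}}\max_j (f_j(x)-v_j)/\hat d_j$. For finite $V\subset[m,M]$, the copolyblock with vertex set $V$ is $\bigcup_{v\in V}[v,M]$; a vertex is proper if no other vertex $v'\ne v$ satisfies $v'\le v$. Algorithm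 Solve(QVP) with tolerance $\epsilon\ge0$: set $V^0=\{m\}$, $V_\varepsilon=\emptyset$, $\mathcal{Y}_{WN}=\emptyset$, $k=0$. While $V^k\setminus V_\varepsilon\ne\emptyset$: choose $v^k\in V^k\setminus V_\varepsilon$, solve $(P^2(v^k))$ obtaining optimal $(x^k,t_k)$, set $w^k=v^k+t_k\hat d$, add $f(x^k)$ to $\mathcal{Y}_{WN}$; if $\|w^k-v^k\|\le\epsilon$, add $v^k$ to $V_\varepsilon$ and repeat the loop (without changing $k$); otherwise set $V^{k+1}=(V^k\setminus\{v^k\})\cup\{v^k+(w^k_i-v^k_i)e^i: i=1,\dots,p\}$, remove its improper elements, and increase $k$ by one. $\mathcal{P}^k=\bigcup_{v\in V^k}[v,M]$ ($\mathcal{P}^0=[m,M]$). $d_H(Q_1,Q_2)=\max\{\sup_{a\in Q_1}d(a,Q_2),\sup_{b\in Q_2}d(b,Q_1)\}$ is the Hausdorff distance, $d(a,Q)=\inf_{y\in Q}\|a-y\|$. *)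

(* Defs.v *)
From HB Require Import structures.
From mathcomp Require Import all_boot all_order all_algebra.
From mathcomp Require Import all_classical all_reals all_analysis.
Set Implicit Arguments. Unset Strict Implicit. Unset Printing Implicit Defensive.
Import Order.TTheory GRing.Theory Num.Theory.
Import numFieldNormedType.Exports.
Local Open Scope classical_set_scope.
Local Open Scope ring_scope.

Section Defs.
Variable R : realType.

(* Objective-space vectors: 'I_p -> R.  Decision-space vectors: 'rV[R]_n. *)

Definition vle (p : nat) (a b : 'I_p -> R) : Prop := forall i, a i <= b i.

Definition enorm (p : nat) (a : 'I_p -> R) : R := Num.sqrt (\sum_(i < p) a i ^+ 2).

Definition vsub (p : nat) (a b : 'I_p -> R) : 'I_p -> R := fun i => a i - b i.

Definition dist_set (p : nat) (a : 'I_p -> R) (Q : set ('I_p -> R)) : R :=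
  inf [set enorm (vsub a y) | y in Q].

Definition dHaus (p : nat) (Q1 Q2 : set ('I_p -> R)) : R :=
  Num.max (sup [set dist_set a Q2 | a in Q1]) (sup [set dist_set b Q1 | b in Q2]).

Definition maxcomp (p : nat) (g : 'I_p -> R) : R := sup (range g).

Definition cvx_set (n : nat) (S : set 'rV[R]_n) : Prop :=
  forall x y l, S x -> S y -> 0 <= l -> l <= 1 -> S (l *: x + (1 - l) *: y).

Definition strictly_quasiconvex_on (n : nat) (S : set 'rV[R]_n) (h : 'rV[R]_n -> R) : Prop :=
  {within S, continuous h} /\
  forall x1 x2 l, S x1 -> S x2 -> h x1 < h x2 -> 0 < l -> l < 1 ->
    h (l *: x1 + (1 - l) *: x2) < h x2.

Definition P2val (n p : nat) (S : set 'rV[R]_n) (f : 'rV[R]_n -> 'I_p -> R)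
  (dhat v : 'I_p -> R) : R :=
  inf [set maxcomp (fun j => (f x j - v j) / dhat j) | x in S].

Definition wpt (n p : nat) (S : set 'rV[R]_n) (f : 'rV[R]_n -> 'I_p -> R)
  (dhat v : 'I_p -> R) : 'I_p -> R :=
  fun i => v i + P2val S f dhat v * dhat i.

Definition new_vertices (p : nat) (v w : 'I_p -> R) : set ('I_p -> R) :=
  [set (fun l => v l + (w i - v i) * (if l == i then 1 else 0)) | i in [set: 'I_p]].

Definition proper_part (p : nat) (C : set ('I_p -> R)) : set ('I_p -> R) :=
  [set u | C u /\ ~ (exists u', C u' /\ u' <> u /\ vle u' u)].

(** one (non-epsilon) update step of Solve(QVP) at the chosen vertex v *)
Definition update_step (p : nat) (V : set ('I_p -> R)) (v w : 'I_p -> R) : set ('I_p -> R) :=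
  proper_part ((V `\` [set v]) `|` new_vertices v w).

Definition copolyblock (p : nat) (V : set ('I_p -> R)) (M : 'I_p -> R) : set ('I_p -> R) :=
  [set y | exists2 v, V v & vle v y /\ vle y M].

Definition Ydiamond (n p : nat) (S : set 'rV[R]_n) (f : 'rV[R]_n -> 'I_p -> R)
  (M : 'I_p -> R) : set ('I_p -> R) :=
  [set y | (exists2 x, S x & vle (f x) y) /\ vle y M].

End Defs.

(* Main.v *)
Require Import Defs.
From HB Require Import structures.
From mathcomp Require Import all_boot all_order all_algebra.
From mathcomp Require Import all_classical all_reals all_analysis.
From mathcomp Require Import lra.
Import Order.TTheory GRing.Theory Num.Theory.
Import numFieldNormedType.Exports.
Local Open Scope classical_set_scope.
Local Open Scope ring_scope.

Lemma maxcompP {R : realType} {p : nat} (g : 'I_p -> R) (i0 : 'I_p) :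
  exists j, maxcomp g = g j /\ forall i, g i <= g j.
Proof.
case: (@arg_maxP _ R _ i0 xpredT g) => // j _ H.
exists j; split; last by move=> i; exact: H.
apply/le_anti/andP; split.
  apply: ge_sup; first by exists (g i0), i0.
  by move=> _ [i _ <-]; exact: H.
apply: (ub_le_sup (E := range g)); last by exists j.
by exists (g j) => _ [i _ <-]; exact: H.
Qed.

Lemma enorm_le {R : realType} {p : nat} (a b : 'I_p -> R) :
  (forall i, `|a i| <= b i) -> enorm a <= enorm b.
Proof.
move=> H; rewrite /enorm ler_sqrt; last by apply: sumr_ge0 => i _; exact: sqr_ge0.
apply: ler_sum => i _; have := H i; rewrite ler_norml => /andP[h1 h2]; nra.
Qed.

Lemma enormZ {R : realType} {p : nat} (c : R) (d : 'I_p -> R) :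
  enorm (fun i => c * d i) = `|c| * enorm d.
Proof.
rewrite /enorm; under eq_bigr do rewrite exprMn.
by rewrite -mulr_sumr sqrtrM ?sqr_ge0 // sqrtr_sqr.
Qed.

Lemma enorm_ge0 {R : realType} {p : nat} (a : 'I_p -> R) : 0 <= enorm a.
Proof. exact: sqrtr_ge0. Qed.

Lemma enorm0 {R : realType} {p : nat} (a : 'I_p -> R) : enorm (vsub a a) = 0.
Proof.
rewrite /enorm /vsub; under eq_bigr do rewrite subrr expr0n /=.
by rewrite big1 // sqrtr0.
Qed.

Lemma inIn {T : eqType} (x : T) (s : seq T) : x \in s -> List.In x s.
Proof.
elim: s => //= y s IH; rewrite in_cons => /orP[/eqP->|/IH]; by [left|right].
Qed.

Lemma list_min {R : realType} {T : Type} (s : list T) (P : T -> Prop) (phi : T -> R) :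
  (exists b, List.In b s /\ P b) ->
  exists a, [/\ List.In a s, P a & forall b, List.In b s -> P b -> phi a <= phi b].
Proof.
elim: s => [[b [] []]|x s IH] /=.
move=> [b [Hb Pb]].
have [Px|nPx] := pselect (P x).
  have [ex|nex] := pselect (exists b, List.In b s /\ P b).
    have [a [Ia Pa Ha]] := IH ex.
    have [le|lt] := leP (phi x) (phi a).
      exists x; split => //; first by left.
      move=> c [<-|Ic] Pc //; exact: le_trans le (Ha _ Ic Pc).
    exists a; split => //; first by right.
    move=> c [<-|Ic] Pc; [exact: ltW | exact: Ha].
  exists x; split => //; first by left.
  move=> c [<-|Ic] Pc //; exfalso; apply: nex; by exists c.
have ex : exists b, List.In b s /\ P b.
  by case: Hb => [Hx|Ib]; [subst; contradiction | exists b].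
have [a [Ia Pa Ha]] := IH ex.
exists a; split => //; first by right.
by move=> c [<-|Ic] Pc //; apply: Ha.
Qed.

Lemma list_bound {R : realType} {T : Type} (s : list T) (h : T -> R) :
  exists B, forall b, List.In b s -> h b <= B.
Proof.
elim: s => [|x s [B HB]]; first by exists 0.
exists (Num.max (h x) B) => b /= [<-|Ib]; rewrite le_max ?lexx //.
by rewrite HB ?orbT.
Qed.

Lemma sum_lt {R : realType} {p : nat} (u a : 'I_p -> R) :
  vle u a -> u <> a -> \sum_i u i < \sum_i a i.
Proof.
move=> le ne.
have [i hi] : exists i, u i <> a i.
  apply: contrapT => H; apply: ne; apply: funext => i.
  by apply: contrapT => h; apply: H; exists i.
rewrite (bigD1 i) //= [X in _ < X](bigD1 i) //=.
apply: ltr_leD; first by rewrite lt_neqAle le andbT; apply/eqP.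
by apply: ler_sum => j _; exact: le.
Qed.

Lemma suple {R : realType} (A : set R) c :
  0 <= c -> (forall x, A x -> x <= c) -> sup A <= c.
Proof.
move=> c0 H; have [->|/set0P ne] := eqVneq A set0; first by rewrite sup0.
exact: ge_sup.
Qed.
Theorem mainTheorem5 (R : realType) (n p : nat) (S : set 'rV[R]_n)
  (f : 'rV[R]_n -> 'I_p -> R) (m M dhat : 'I_p -> R) (eps : R)
  (V : nat -> set ('I_p -> R)) (k : nat) :
  (2 <= p)%N ->
  S !=set0 -> cvx_set S -> compact S ->
  (forall i, strictly_quasiconvex_on S (fun x => f x i)) ->
  (* m_i = min_{x in S} f_i(x) *)
  (forall i, (exists2 x, S x & f x i = m i) /\ (forall x, S x -> m i <= f x i)) ->
  ~ (exists2 x, S x & f x = m) ->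
  (forall i x, S x -> f x i <= M i) ->
  (forall i, 0 < dhat i) ->
  0 <= eps ->
  (* the run of Solve(QVP) up to iteration k *)
  V 0%N = [set m] ->
  (forall j, (j < k)%N ->
     exists v, [/\ V j v,
       eps < enorm (vsub (wpt S f dhat v) v) &
       V j.+1 = update_step (V j) v (wpt S f dhat v)]) ->
  dHaus (copolyblock (V k) M) (Ydiamond S f M)
    <= sup [set enorm (vsub (wpt S f dhat v) v) | v in V k].
Proof.
move=> p2 [x0 Sx0] _ _ _ hm _ fM d0 _ hV0 hstep.
have p0 : (0 < p)%N by apply: leq_trans p2.
pose i0 : 'I_p := Ordinal p0.
pose T v := [set maxcomp (fun j => (f x j - v j) / dhat j) | x in S].
have hasinf : forall v, has_inf (T v).
  move=> v; split; first by exists (maxcomp (fun j => (f x0 j - v j) / dhat j)), x0.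
  exists ((m i0 - v i0) / dhat i0) => _ [x Sx <-].
  have [j [-> Hj]] := maxcompP (fun j => (f x j - v j) / dhat j) i0.
  apply: le_trans (Hj i0).
  rewrite ler_pM2r ?invr_gt0 //; apply: lerB => //; exact: (hm i0).2.
pose Fin j := exists s : seq ('I_p -> R), forall u, V j u -> List.In u s.
pose Inv j := forall y, (exists2 x, S x & vle (f x) y) -> exists2 u, V j u & vle u y.
have key : forall j, (j <= k)%N -> Fin j /\ Inv j.
  elim=> [|j IH] hj.
    rewrite /Fin /Inv hV0; split; first by exists [:: m] => u ->; left.
    by move=> y [x Sx le]; exists m => // i; apply: le_trans (le i); exact: (hm i).2.
  have hjk : (j < k)%N by [].
  have [v [Vv _ hVj]] := hstep j hjk.
  have [[s Hs] Hinv] := IH (ltnW hj).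
  set w := wpt S f dhat v in hVj.
  pose nv (i : 'I_p) := fun l => v l + (w i - v i) * (if l == i then 1 else 0).
  pose C := (V j `\` [set v]) `|` new_vertices v w.
  pose s' := s ++ map nv (enum 'I_p).
  have hCs : forall u, C u -> List.In u s'.
    move=> u [[Vu _]|[i _ <-]]; apply: List.in_or_app; first by left; exact: Hs.
    by right; apply: List.in_map; apply: inIn; rewrite mem_enum.
  split.
    by exists s' => u; rewrite hVj => -[Cu _]; exact: hCs.
  move=> y [x Sx fxy].
  have [u Vu uy] := Hinv y (ex_intro2 _ _ x Sx fxy).
  have [u1 [Cu1 u1y]] : exists u1, C u1 /\ vle u1 y.
    have [uv|neq] := pselect (u = v); last by exists u; split => //; left.
    subst u.
    pose g := fun j => (f x j - v j) / dhat j.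
    have [jx [gE Hg]] := maxcompP g i0.
    have tle : P2val S f dhat v <= g jx.
      rewrite -gE; apply: (ge_inf (hasinf v).2); by exists x.
    have tle' : P2val S f dhat v * dhat jx <= y jx - v jx.
      rewrite -ler_pdivlMr //; apply: le_trans tle _.
      rewrite ler_pM2r ?invr_gt0 //; exact: lerB.
    exists (nv jx); split; first by right; exists jx.
    move=> l; rewrite /nv; case: eqP => [->|_].
      rewrite mulr1 /w /wpt; lra.
    by rewrite mulr0 addr0; exact: uy.
  have [a [Ia [Ca ay] Ha]] := list_min s' (fun b => C b /\ vle b y) (fun b => \sum_i b i)
     (ex_intro _ u1 (conj (hCs _ Cu1) (conj Cu1 u1y))).
  exists a => //; rewrite hVj; split => // -[u2 [Cu2 [ne le]]].
  have h1 := Ha u2 (hCs _ Cu2) (conj Cu2 (fun i => le_trans (le i) (ay i))).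
  have h2 := sum_lt _ _ le ne.
  by move: h1; rewrite leNgt h2.
have [[sk Hsk] Invk] := key k (leqnn k).
set E := [set enorm (vsub (wpt S f dhat v) v) | v in V k].
have hEub : has_ubound E.
  have [B HB] := list_bound sk (fun v => enorm (vsub (wpt S f dhat v) v)).
  by exists B => _ [v Vv <-]; apply: HB; apply: Hsk.
have E0 : 0 <= sup E.
  have [u Vu _] := Invk (f x0) (ex_intro2 _ _ x0 Sx0 (fun i => lexx _)).
  apply: le_trans (enorm_ge0 (vsub (wpt S f dhat u) u)) _.
  by apply: (ub_le_sup hEub); exists u.
rewrite /dHaus ge_max; apply/andP; split; apply: suple => // _ [a Pa <-].
  case: Pa => v Vv [va aM].
  have hv : enorm (vsub (wpt S f dhat v) v) <= sup E by apply: (ub_le_sup hEub); exists v.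
  apply: le_trans hv.
  set t := P2val S f dhat v.
  have -> : vsub (wpt S f dhat v) v = (fun i => t * dhat i).
    by apply: funext => i; rewrite /vsub /wpt addrC addKr.
  rewrite enormZ; set N := enorm dhat.
  have N0 : 0 <= N := enorm_ge0 dhat.
  apply/ler_addgt0Pr => e e0.
  pose dl := e / (N + 1).
  have dl0 : 0 < dl by rewrite divr_gt0 // ltr_wpDl.
  have [z [x Sx <-] zlt] := inf_adherent dl0 (hasinf v).
  pose g := fun j => (f x j - v j) / dhat j.
  have [jx [gE Hg]] := maxcompP g i0.
  pose y := fun i => Num.max (a i) (f x i).
  have Yy : Ydiamond S f M y.
    split; first by exists x => // i; rewrite /y le_max lexx orbT.
    by move=> i; rewrite /y ge_max aM fM.
  apply: le_trans (_ : enorm (vsub a y) <= _).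
    apply: (ge_inf (E := [set enorm (vsub a y0) | y0 in Ydiamond S f M])).
      by exists 0 => _ [y0 _ <-]; exact: enorm_ge0.
    by exists y.
  apply: le_trans (_ : enorm (fun i => (`|t| + dl) * dhat i) <= _).
    apply: enorm_le => i; rewrite /vsub /y.
    have gi : g i < t + dl by apply: le_lt_trans (Hg i) _; rewrite -gE.
    move: gi; rewrite /g ltr_pdivrMr // => gi.
    have tn := ler_norm t.
    have di := d0 i.
    have vi := va i.
    have [h|h] := leP (a i) (f x i).
      rewrite ler_norml; apply/andP; split; nra.
    rewrite subrr normr0; apply: mulr_ge0; last exact: ltW.
    apply: addr_ge0 => //; exact: ltW.
  rewrite enormZ ger0_norm; last by apply: addr_ge0 => //; exact: ltW.
  rewrite mulrDl lerD2l.
  have : dl * (N + 1) = e by rewrite /dl divfK // gt_eqF // ltr_wpDl.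
  move=> hd; rewrite mulrDr mulr1 in hd; rewrite -/N; clearbody dl N; lra.
case: Pa => [[x Sx fxa] aM].
have [u Vu ua] := Invk a (ex_intro2 _ _ x Sx fxa).
apply: le_trans E0.
apply: le_trans (_ : enorm (vsub a a) <= 0); last by rewrite enorm0.
apply: (ge_inf (E := [set enorm (vsub a y0) | y0 in copolyblock (V k) M])).
  by exists 0 => _ [y0 _ <-]; exact: enorm_ge0.
by exists a => //; exists u.
Qed.
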